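(* Let $s\ge1$. A general binary form $p\in H_{2s}(\mathbb{C}^2)$ can be written as $$p(x,y) = \Bigl(\sum_{k=0}^s t_kx^{s-k}y^k\Bigr)^2 + \Bigl(\sum_{k=1}^s t_{s+k}x^{s-k}y^k\Bigr)^2, \qquad t_k\in\mathbb{C},$$ in exactly $\binom{2s-1}{s}$ different ways. Note that the monomial $x^s$ does not appear in the second form.
   Context: $H_d(\mathbb{C}^n)$ denotes the complex vector space of homogeneous polynomials of degree $d$ in $n$ variables. ''A general $p$ has property P'' means P holds for all $p$ in a nonempty Zariski-open subset of $H_d(\mathbb{C}^n)$. Two representations are considered the same if they agree up to replacing each of the two squared forms by its negative. *)

(* Defs.v *)
From HB Require Import structures.
From mathcomp Require Import all_boot all_order all_algebra.
Set Implicit Arguments. Unset Strict Implicit. Unset Printing Implicit Defensive.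
Import Order.TTheory GRing.Theory Num.Theory.
Local Open Scope ring_scope.

(* A polynomial in n variables over F, given as a finite list of terms
   (exponent vector, coefficient). *)
Definition mpoly (F : nzRingType) (n : nat) := seq (('I_n -> nat) * F).

Definition meval (F : comNzRingType) (n : nat) (g : mpoly F n) (x : 'I_n -> F) : F :=
  \sum_(m <- g) m.2 * \prod_(i < n) x i ^+ m.1 i.

Definition nonvanish (F : comNzRingType) (n : nat) (G : seq (mpoly F n)) (x : 'I_n -> F) : bool :=
  has (fun g => meval g x != 0) G.

(* "a general point of F^n has property P": P holds on a nonempty Zariski-open
   subset of F^n (every Zariski-open set is of the form nonvanish G). *)
Definition general (F : comNzRingType) (n : nat) (P : ('I_n -> F) -> Prop) : Prop :=
  exists G : seq (mpoly F n),
    (exists x, nonvanish G x) /\ (forall x, nonvanish G x -> P x).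

(* The binary form p(x,y) = sum_i c_i x^(2s-i) y^i, dehomogenized at x = 1. *)
Definition form_of (F : nzRingType) (s : nat) (c : 'I_(2 * s).+1 -> F) : {poly F} :=
  \poly_(i < (2 * s).+1) c (inord i).

(* First form  sum_{k=0}^s t_k x^(s-k) y^k  (dehomogenized at x = 1). *)
Definition formA (F : nzRingType) (s : nat) (t : 'I_(2 * s).+1 -> F) : {poly F} :=
  \poly_(k < s.+1) t (inord k).

(* Second form  sum_{k=1}^s t_(s+k) x^(s-k) y^k  (dehomogenized at x = 1). *)
Definition formB (F : nzRingType) (s : nat) (t : 'I_(2 * s).+1 -> F) : {poly F} :=
  \poly_(k < s.+1) (if k == 0%N then 0 else t (inord (s + k))).

Definition is_rep (F : nzRingType) (s : nat) (c t : 'I_(2 * s).+1 -> F) : Prop :=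
  form_of c = formA t ^+ 2 + formB t ^+ 2.

(* Two representations are the same if they agree up to replacing each of the
   two squared forms by its negative. *)
Definition same_rep (F : nzRingType) (s : nat) (t t' : 'I_(2 * s).+1 -> F) : Prop :=
  exists b1 b2 : bool, forall k : 'I_(2 * s).+1,
    t' k = (if (k <= s)%N then (-1) ^+ b1 else (-1) ^+ b2) * t k.

Definition exactly_n_reps (F : nzRingType) (s N : nat) (c : 'I_(2 * s).+1 -> F) : Prop :=
  exists ts : 'I_N -> ('I_(2 * s).+1 -> F),
    (forall i, is_rep c (ts i)) /\
    (forall i j, i != j -> ~ same_rep (ts i) (ts j)) /\
    (forall t, is_rep c t -> exists i, same_rep (ts i) t).

(* Main.v *)
Require Import Defs.
From HB Require Import structures.
From mathcomp Require Import all_boot all_order all_algebra all_fingroup all_field.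
From mathcomp Require Import zify ring.
Set Implicit Arguments. Unset Strict Implicit. Unset Printing Implicit Defensive.
Import Order.TTheory GRing.Theory Num.Theory.
Local Open Scope ring_scope.

Section MP.
Variables (F : comNzRingType) (n : nat).
Implicit Types (g h : mpoly F n) (x : 'I_n -> F).

Definition mconst (a : F) : mpoly F n := [:: (fun _ => 0%N, a)].
Definition mvar (i : 'I_n) : mpoly F n := [:: (fun j => nat_of_bool (j == i), 1)].
Definition mmul g h : mpoly F n :=
  [seq (fun i => (m1.1 i + m2.1 i)%N, m1.2 * m2.2) | m1 <- g, m2 <- h].
Definition msum (l : seq (mpoly F n)) : mpoly F n := flatten l.
Definition mprod (l : seq (mpoly F n)) : mpoly F n := foldr mmul (mconst 1) l.

Lemma meval_const a x : meval (mconst a) x = a.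
Proof. by rewrite /meval big_seq1 /= big1 ?mulr1 // => i _; rewrite expr0. Qed.

Lemma meval_nil x : meval ([::] : mpoly F n) x = 0.
Proof. by rewrite /meval big_nil. Qed.

Lemma meval_var i x : meval (mvar i) x = x i.
Proof.
rewrite /meval big_seq1 /= mul1r (bigD1 i) //= eqxx expr1 big1 ?mulr1 //.
by move=> j /negPf ->; rewrite expr0.
Qed.

Lemma meval_mul g h x : meval (mmul g h) x = meval g x * meval h x.
Proof.
rewrite /meval /mmul big_allpairs_dep /= mulr_suml; apply: eq_bigr => m1 _.
rewrite mulr_sumr; apply: eq_bigr => m2 _ /=.
under eq_bigr do rewrite exprD.
by rewrite big_split /= mulrACA.
Qed.

Lemma meval_cat g h x : meval (g ++ h) x = meval g x + meval h x.
Proof. by rewrite /meval big_cat. Qed.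

Lemma meval_sum l x : meval (msum l) x = \sum_(g <- l) meval g x.
Proof.
elim: l => [|g l IH]; first by rewrite big_nil meval_nil.
by rewrite /msum /= meval_cat big_cons -IH.
Qed.

Lemma meval_prod l x : meval (mprod l) x = \prod_(g <- l) meval g x.
Proof.
elim: l => [|g l IH]; first by rewrite big_nil meval_const.
by rewrite /mprod /= meval_mul big_cons -IH.
Qed.

Definition mdet k (e : 'I_k -> 'I_k -> mpoly F n) : mpoly F n :=
  msum [seq mmul (mconst ((-1) ^+ odd_perm s)) (mprod [seq e i (s i) | i <- enum 'I_k])
       | s : 'S_k <- enum ('S_k)].

Lemma meval_det k (e : 'I_k -> 'I_k -> mpoly F n) x :
  meval (mdet e) x = \det (\matrix_(i, j) meval (e i j) x).
Proof.
rewrite /mdet meval_sum big_map /determinant big_enum /=.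
apply: eq_bigr => s _; rewrite meval_mul meval_const meval_prod big_map big_enum /=.
by congr (_ * _); apply: eq_bigr => i _; rewrite mxE.
Qed.
End MP.

Lemma res_gen (R : comNzRingType) (p q : {poly R}) dp dq
  (E : 'I_(dq + dp) -> 'I_(dq + dp) -> R) :
  (size q).-1 = dq -> (size p).-1 = dp ->
  (forall i j, E i j = match split i with inl k => p`_(j - k) *+ (k <= j)
                       | inr k => q`_(j - k) *+ (k <= j) end) ->
  resultant p q = \det (\matrix_(i, j) E i j).
Proof.
move=> Hq Hp HE; rewrite /resultant; have := @Sylvester_mxE R p q.
move: (Sylvester_mx p q); rewrite Hq Hp => M HM.
congr (\det _); apply/matrixP => i j; rewrite HM mxE HE.
by [].
Qed.

Section Main.
Variables (F : numClosedFieldType) (s : nat).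
Hypothesis hs : (0 < s)%N.
Variable c : 'I_(2 * s).+1 -> F.
Let p := form_of c.
Hypotheses (c0 : c ord0 != 0) (cN : c ord_max != 0) (sep : separable_poly p).

Let m' := (2 * s - 1)%N.
Lemma m'E : m'.+1 = (2 * s)%N.
Proof. rewrite /m'; case: s hs => // k _; by rewrite mulnS. Qed.

Lemma inord_max : inord (2 * s) = ord_max :> 'I_(2 * s).+1.
Proof. by apply: val_inj; rewrite /= inordK. Qed.

Lemma size_p : size p = (2 * s).+1.
Proof. by rewrite size_poly_eq //= inord_max. Qed.

Lemma lc_p : lead_coef p = c ord_max.
Proof. by rewrite lead_coef_poly //= ?inord_max. Qed.

Lemma p0 : p.[0] = c ord0.
Proof.
rewrite horner_coef0 coef_poly /=; congr (c _); apply: val_inj; by rewrite /= inordK.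
Qed.

Let lc := c ord_max.

Definition rs := sval (closed_field_poly_normal p).
Lemma rsE : p = lc *: \prod_(z <- rs) ('X - z%:P).
Proof. by rewrite /rs; case: closed_field_poly_normal => /= r {1}->; rewrite lc_p. Qed.

Lemma size_rs : size rs == m'.+1.
Proof.
have := size_p; rewrite {1}rsE size_scale // size_prod_XsubC m'E.
by case=> ->.
Qed.

Lemma uniq_rs : uniq rs.
Proof.
rewrite -separable_prod_XsubC -(eqp_separable (eqp_scale _ cN)) -rsE; exact: sep.
Qed.

Lemma rs_neq0 z : z \in rs -> z != 0.
Proof.
move=> zr; apply: contraTneq zr => ->.
rewrite -root_prod_XsubC -(rootZ _ _ cN) -rsE /root p0 //.
Qed.

Definition rt : m'.+1.-tuple F := Tuple size_rs.
Definition r (i : 'I_m'.+1) : F := tnth rt i.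

Lemma r_inj : injective r.
Proof.
move=> i j; rewrite /r !(tnth_nth 0) /= => /eqP.
rewrite nth_uniq ?uniq_rs ?(eqP size_rs) //; by move/eqP/val_inj.
Qed.

Lemma r_neq0 i : r i != 0.
Proof. apply: rs_neq0; rewrite /r; exact: (mem_tnth i rt). Qed.

Lemma pE : p = lc *: \prod_(i < m'.+1) ('X - (r i)%:P).
Proof. by rewrite {1}rsE; congr (_ *: _); rewrite (big_tuple _ _ rt (fun z => true%B) (fun z => ('X - z%:P))). Qed.

Definition PS (S : {set 'I_m'.+1}) := \prod_(z <- [seq r i | i in S]) ('X - z%:P).

Lemma PS_split S : p = lc *: (PS S * PS (~: S)).
Proof.
rewrite pE /PS !big_image (bigID (mem S)) /=; congr (_ *: (_ * _)).
by apply: eq_bigl => i; rewrite in_setC.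
Qed.

Lemma size_PS S : size (PS S) = #|S|.+1.
Proof. by rewrite /PS size_prod_XsubC size_image. Qed.

Lemma root_PS S k : root (PS S) (r k) = (k \in S).
Proof. by rewrite /PS root_prod_XsubC mem_image //; exact: r_inj. Qed.

Lemma PS0 S : (PS S).[0] != 0.
Proof.
rewrite /PS -/(root _ 0) root_prod_XsubC; apply/negP => /imageP [i _ /esym].
by apply/eqP; rewrite r_neq0.
Qed.

Lemma PS_neq0 S : PS S != 0.
Proof. by rewrite -size_poly_gt0 size_PS. Qed.

Definition lam S := sqrtC (lc * (PS (~: S)).[0] / (PS S).[0]).
Definition mu S := lc / lam S.
Definition fS S := lam S *: PS S.
Definition gS S := mu S *: PS (~: S).

Lemma lam_neq0 S : lam S != 0.
Proof.
by rewrite /lam sqrtC_eq0 !mulf_neq0 ?invr_eq0 ?PS0.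
Qed.

Lemma mu_neq0 S : mu S != 0.
Proof. by rewrite /mu mulf_neq0 ?invr_eq0 ?lam_neq0. Qed.

Lemma fgS S : fS S * gS S = p.
Proof.
rewrite (PS_split S) /fS /gS -scalerAl -scalerAr scalerA /mu.
by congr (_ *: _); rewrite mulrC divfK ?lam_neq0.
Qed.

Lemma fgS0 S : (fS S).[0] = (gS S).[0].
Proof.
rewrite /fS /gS !hornerZ /mu.
have la := lam_neq0 S; have a0 := PS0 S.
apply: (mulfI la); rewrite mulrA -expr2 /lam sqrtCK -/(lam S) divfK // mulrA [lam S * (lc / _)]mulrC divfK //.

Qed.

Lemma root_fS S k : root (fS S) (r k) = (k \in S).
Proof. by rewrite /fS rootZ ?lam_neq0 // root_PS. Qed.

Lemma root_gS S k : root (gS S) (r k) = (k \notin S).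
Proof. by rewrite /gS rootZ ?mu_neq0 // root_PS in_setC. Qed.

Lemma size_fS S : size (fS S) = #|S|.+1.
Proof. by rewrite /fS size_scale ?lam_neq0 // size_PS. Qed.

Lemma size_gS S : size (gS S) = #|~: S|.+1.
Proof. by rewrite /gS size_scale ?mu_neq0 // size_PS. Qed.

Lemma cardC_s (S : {set 'I_m'.+1}) : #|S| = s -> #|~: S| = s.
Proof.
move=> hS; have := cardsC S; rewrite card_ord hS => e; have := m'E; lia.

Qed.

Definition AofFG (f g : {poly F}) := 2^-1 *: (f + g).
Definition BofFG (f g : {poly F}) := (2^-1 / 'i) *: (f - g).

Lemma two_neq0 : (2%:R : F) != 0.
Proof. by rewrite pnatr_eq0. Qed.

Lemma hu2 : ((2^-1 : F)%:P) * 2%:R = 1.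
Proof. by rewrite -polyC_natr -polyCM mulVf ?two_neq0. Qed.

Lemma AB_sq f g : AofFG f g ^+ 2 + BofFG f g ^+ 2 = f * g.
Proof.
rewrite /AofFG /BofFG -!mul_polyC.
have hv : ((2^-1 / 'i : F)%:P) ^+ 2 = - ((2^-1 : F)%:P ^+ 2).
  by rewrite -!rmorphXn -rmorphN /= exprMn exprVn ['i^-1 ^+ 2]exprVn sqrCi invrN1 mulrN1.
have h1 : (1 : {poly F}) = ((2^-1 : F)%:P * 2%:R) * ((2^-1 : F)%:P * 2%:R).
  by rewrite hu2 mulr1.
rewrite !exprMn hv -[f * g]mul1r h1.
ring.
Qed.

Lemma iv : 'i * (2^-1 / 'i) = 2^-1 :> F.
Proof. by rewrite mulrC divfK ?neq0Ci. Qed.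

Lemma AB_f f g : AofFG f g + 'i *: BofFG f g = f.
Proof.
rewrite /AofFG /BofFG scalerA iv -!mul_polyC -[RHS]mul1r -hu2; ring.
Qed.

Lemma AB_g f g : AofFG f g - 'i *: BofFG f g = g.
Proof.
rewrite /AofFG /BofFG scalerA iv -!mul_polyC -[RHS]mul1r -hu2; ring.
Qed.

Lemma AB_invA (A B : {poly F}) : AofFG (A + 'i *: B) (A - 'i *: B) = A.
Proof.
rewrite /AofFG -!mul_polyC -[RHS]mul1r -hu2; ring.
Qed.

Lemma AB_invB (A B : {poly F}) : BofFG (A + 'i *: B) (A - 'i *: B) = B.
Proof.
rewrite /BofFG -!mul_polyC.
have -> : (2^-1 / 'i : F)%:P * (A + 'i%:P * B - (A - 'i%:P * B))
   = (2^-1 / 'i * 'i : F)%:P * 2%:R * B.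
  by rewrite !polyCM; ring.
by rewrite divfK ?neq0Ci // hu2 mul1r.
Qed.

Definition rep_of (A B : {poly F}) : 'I_(2 * s).+1 -> F :=
  fun k => if (k <= s)%N then A`_k else B`_(k - s).

Lemma formA_rep (A B : {poly F}) : (size A <= s.+1)%N -> formA (rep_of A B) = A.
Proof.
move=> hA; apply/polyP => k; rewrite coef_poly; case: ltnP => hk.
  rewrite /rep_of inordK; last by lia.
  by rewrite ifT //; lia.
by rewrite nth_default // (leq_trans hA hk).
Qed.

Lemma formB_rep (A B : {poly F}) : (size B <= s.+1)%N -> B`_0 = 0 -> Defs.formB (rep_of A B) = B.
Proof.
move=> hB hB0; apply/polyP => k; rewrite coef_poly; case: ltnP => hk.
  case: eqP => [->|/eqP k0]; first by rewrite hB0.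
  rewrite /rep_of inordK; last by lia.
  rewrite ifF; last by lia.
  by rewrite addKn.
by rewrite nth_default // (leq_trans hB hk).
Qed.

Lemma rep_formAB t k : rep_of (formA t) (Defs.formB t) k = t k.
Proof.
rewrite /rep_of; case: ifP => hk; rewrite coef_poly.
  rewrite ifT; last by lia.
  by congr (t _); apply: val_inj; rewrite /= inordK.
have hk2 := ltn_ord k.
rewrite ifT; last by lia.
rewrite ifF; last by lia.
congr (t _); apply: val_inj; rewrite /= inordK; lia.
Qed.

Lemma rep_scale e (A B : {poly F}) k : rep_of (e *: A) (e *: B) k = e * rep_of A B k.
Proof. by rewrite /rep_of; case: ifP; rewrite coefZ. Qed.

Lemma formA_sign (t t' : 'I_(2 * s).+1 -> F) e1 e2 :
  (forall k : 'I_(2 * s).+1, t' k = (if (k <= s)%N then e1 else e2) * t k) ->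
  formA t' = e1 *: formA t /\ Defs.formB t' = e2 *: Defs.formB t.
Proof.
move=> H; split; apply/polyP => k; rewrite coefZ !coef_poly.
  case: ltnP => hk; last by rewrite mulr0.
  by rewrite H inordK ?ifT //; lia.
case: ltnP => hk; last by rewrite mulr0.
case: eqP => k0; first by rewrite mulr0.
rewrite H inordK ?ifF //; lia.
Qed.

Lemma size_formA (t : 'I_(2 * s).+1 -> F) : (size (formA t) <= s.+1)%N.
Proof. exact: size_poly. Qed.
Lemma size_formB (t : 'I_(2 * s).+1 -> F) : (size (Defs.formB t) <= s.+1)%N.
Proof. exact: size_poly. Qed.
Lemma formB0 (t : 'I_(2 * s).+1 -> F) : (Defs.formB t)`_0 = 0.
Proof. by rewrite coef_poly. Qed.

Definition tsS (S : {set 'I_m'.+1}) := rep_of (AofFG (fS S) (gS S)) (BofFG (fS S) (gS S)).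

Lemma size_AB (S : {set 'I_m'.+1}) : #|S| = s ->
  (size (AofFG (fS S) (gS S)) <= s.+1)%N /\ (size (BofFG (fS S) (gS S)) <= s.+1)%N.
Proof.
move=> hS; have hf := size_fS S; have hg := size_gS S; rewrite cardC_s // in hg.
rewrite hS in hf; split.
  apply: leq_trans (size_scale_leq _ _) _; apply: leq_trans (size_add _ _) _.
  by rewrite hf hg maxnn.
apply: leq_trans (size_scale_leq _ _) _; apply: leq_trans (size_add _ _) _.
by rewrite size_opp hf hg maxnn.
Qed.

Lemma B0 (S : {set 'I_m'.+1}) : (BofFG (fS S) (gS S))`_0 = 0.
Proof. by rewrite /BofFG coefZ coefB -!horner_coef0 fgS0 subrr mulr0. Qed.

Lemma tsS_AB (S : {set 'I_m'.+1}) : #|S| = s ->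
  formA (tsS S) = AofFG (fS S) (gS S) /\ Defs.formB (tsS S) = BofFG (fS S) (gS S).
Proof.
move=> hS; have [hA hB] := size_AB hS.
by rewrite /tsS formA_rep // formB_rep // B0.
Qed.

Lemma is_rep_tsS (S : {set 'I_m'.+1}) : #|S| = s -> is_rep c (tsS S).
Proof.
move=> hS; rewrite /is_rep; have [-> ->] := tsS_AB hS; by rewrite AB_sq fgS.
Qed.

Lemma p_neq0 : p != 0.
Proof. by rewrite -size_poly_gt0 size_p. Qed.

Lemma root_p i : root p (r i).
Proof. by rewrite rsE rootZ // root_prod_XsubC; exact: (mem_tnth i rt). Qed.

Lemma dvd_PS (f : {poly F}) : f != 0 ->
  (#|[set i | root f (r i)]| < size f)%N /\ PS [set i | root f (r i)] %| f.
Proof.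
move=> f0; set S := [set i | root f (r i)].
have hd : PS S %| f.
  apply: uniq_roots_dvdp.
    by apply/allP => z /imageP [i iS ->]; rewrite inE in iS.
  rewrite uniq_rootsE map_inj_uniq ?enum_uniq //; exact: r_inj.
by split=> //; rewrite -size_PS; apply: dvdp_leq.
Qed.

Lemma key (f g : {poly F}) : f * g = p -> (size f <= s.+1)%N -> (size g <= s.+1)%N ->
  f.[0] = g.[0] ->
  #|[set i | root f (r i)]| = s /\
  exists b : bool, f = (-1) ^+ b *: fS [set i | root f (r i)] /\
                   g = (-1) ^+ b *: gS [set i | root f (r i)].
Proof.
move=> hfg hf hg h0.
have f0 : f != 0 by apply/eqP => f0; move: p_neq0; rewrite -hfg f0 mul0r eqxx.
have g0 : g != 0 by apply/eqP => g0; move: p_neq0; rewrite -hfg g0 mulr0 eqxx.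
set S := [set i | root f (r i)]; set T := [set i | root g (r i)].
have [cS dS] := dvd_PS f0; have [cT dT] := dvd_PS g0.
rewrite -/S in cS dS; rewrite -/T in cT dT.
have hU : S :|: T = setT.
  apply/setP => i; rewrite !inE -rootM hfg; exact: root_p.
have := cardsUI S T; rewrite hU cardsT card_ord.
have e2 := m'E => hc.
have hS : #|S| = s by lia.
have hI : S :&: T = set0 by apply: cards0_eq; lia.
have hT : T = ~: S.
  apply/setP => i; rewrite in_setC; apply/idP/idP.
    move=> iT; apply/negP => iS.
    have : i \in S :&: T by apply/setIP; split.
    by rewrite hI inE.
  move=> iS; have : i \in S :|: T by rewrite hU inE.
  by rewrite inE (negPf iS).
rewrite hT in dT.
have [q1 hq1] := dvdpP _ _ dS; have [q2 hq2] := dvdpP _ _ dT.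
have q10 : q1 != 0 by apply: contraNneq f0 => q0; rewrite hq1 q0 mul0r.
have q20 : q2 != 0 by apply: contraNneq g0 => q0; rewrite hq2 q0 mul0r.
have sq1 : (size q1 <= 1)%N.
  by move: hf; rewrite hq1 size_mul ?PS_neq0 // size_PS hS addnS /= => h; rewrite -(leq_add2r s) add1n.
have sq2 : (size q2 <= 1)%N.
  by move: hg; rewrite hq2 size_mul ?PS_neq0 // size_PS (cardC_s hS) addnS /= => h; rewrite -(leq_add2r s) add1n.
set al := q1`_0; set be := q2`_0.
have hf' : f = al *: PS S by rewrite hq1 {1}(size1_polyC sq1) mul_polyC.
have hg' : g = be *: PS (~: S) by rewrite hq2 {1}(size1_polyC sq2) mul_polyC.
have al0 : al != 0 by apply: contraNneq f0 => a0; rewrite hf' a0 scale0r.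
have hab : al * be = lc.
  have := hfg; rewrite hf' hg' -scalerAl -scalerAr scalerA (PS_split S) => /(congr1 lead_coef).
  rewrite !lead_coefZ => /mulIf; apply; by rewrite lead_coef_eq0 mulf_neq0 ?PS_neq0.
have hbe : be = lc / al by rewrite -hab mulrAC mulfV // mul1r.
have h0' : al * (PS S).[0] = be * (PS (~: S)).[0] by rewrite -!hornerZ -hf' -hg'.
have hsq : al ^+ 2 == lam S ^+ 2.
  rewrite /lam sqrtCK; apply/eqP; apply: (mulIf (PS0 S)).
  rewrite divfK ?PS0 // expr2 -mulrA h0' mulrA hab //.
move: hsq; rewrite eqf_sqr => hal.
split=> //; exists (al != lam S); rewrite hf' hg' /fS /gS !scalerA; split.
  by case: eqP hal => [->|_ /eqP ->] /=; rewrite ?expr0 ?expr1 ?mul1r ?mulN1r.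
congr (_ *: _); rewrite hbe /mu.
case: eqP hal => [->|_ /eqP ->] /=; rewrite ?expr0 ?expr1 ?mul1r ?mulN1r //.
by rewrite invrN mulrN.
Qed.

Definition Dset := [set A : {set 'I_m'} | #|A| == s].
Lemma HN : 'C(m', s) = #|Dset|.
Proof. by rewrite card_draws card_ord. Qed.

Definition Sof (A : {set 'I_m'}) : {set 'I_m'.+1} := [set lift ord0 j | j in A].

Lemma Sof_card A : #|Sof A| = #|A|.
Proof. apply: card_imset; exact: lift_inj. Qed.

Lemma Sof_0 A : ord0 \notin Sof A.
Proof. by apply/imsetP => [[j _ /eqP]]; rewrite (negPf (neq_lift _ _)). Qed.

Lemma Sof_surj (S : {set 'I_m'.+1}) : ord0 \notin S ->
  Sof [set j | lift ord0 j \in S] = S.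
Proof.
move=> h; apply/setP => k; case: (unliftP ord0 k) => [j ->|->].
  by rewrite mem_imset ?inE //; exact: lift_inj.
by rewrite (negPf h) (negPf (Sof_0 _)).
Qed.

Definition ts (i : 'I_('C(m', s))) := tsS (Sof (enum_val (cast_ord HN i))).

Lemma sign_neq0 (b : bool) : (-1) ^+ b != 0 :> F.
Proof. by rewrite signr_eq0. Qed.

Lemma fS_tsS (S : {set 'I_m'.+1}) : #|S| = s -> formA (tsS S) + 'i *: Defs.formB (tsS S) = fS S /\
                           formA (tsS S) - 'i *: Defs.formB (tsS S) = gS S.
Proof. by move=> hS; have [-> ->] := tsS_AB hS; rewrite AB_f AB_g. Qed.

Lemma distinct (S1 S2 : {set 'I_m'.+1}) : #|S1| = s -> #|S2| = s ->
  ord0 \notin S1 -> ord0 \notin S2 -> same_rep (tsS S1) (tsS S2) -> S1 = S2.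
Proof.
move=> h1 h2 n1 n2 [b1 [b2 H]].
have [hA hB] := formA_sign H.
have [f1 g1] := fS_tsS h1; have [f2 _] := fS_tsS h2.
move: f2; rewrite hA hB.
case: (eqVneq b1 b2) => [<-|nb].
  rewrite scalerA mulrC -scalerA -scalerDr f1 => ef.
  by apply/setP => k; rewrite -root_fS -(root_fS S2) -ef (rootZ _ _ (sign_neq0 b1)).
have -> : b2 = ~~ b1 by move: nb; clear; case: b1; case: b2.
rewrite signrN scalerA mulrN mulrC -mulrN -scalerA -scalerDr.
rewrite scaleNr g1 => eg.
have := root_fS S2 ord0; rewrite -eg (rootZ _ _ (sign_neq0 b1)) root_gS (negPf n2) n1.
by [].
Qed.

Lemma scaleAB e f g : AofFG (e *: f) (e *: g) = e *: AofFG f g /\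
                      BofFG (e *: f) (e *: g) = e *: BofFG f g.
Proof.
by rewrite /AofFG /BofFG -scalerDr -scalerBr !scalerA mulrC [_ * e]mulrC.
Qed.

Lemma BofFG_swap f g : BofFG g f = - BofFG f g.
Proof. by rewrite /BofFG -scalerN opprB. Qed.

Lemma complete (t : 'I_(2 * s).+1 -> F) : is_rep c t ->
  exists S : {set 'I_m'.+1}, [/\ #|S| = s, ord0 \notin S & same_rep (tsS S) t].
Proof.
rewrite /is_rep => ht.
set A := formA t; set B := Defs.formB t.
set f := A + 'i *: B; set g := A - 'i *: B.
have hfg : f * g = p.
  rewrite /p ht /f /g -!mul_polyC.
  have hi : ('i%:P : {poly F}) ^+ 2 = -1 by rewrite -rmorphXn sqrCi rmorphN1.
  transitivity (A ^+ 2 - ('i%:P) ^+ 2 * B ^+ 2); first by ring.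
  by rewrite hi mulN1r opprK.
have sA := size_formA t; have sB := size_formB t.
have hf : (size f <= s.+1)%N.
  apply: leq_trans (size_add _ _) _; rewrite geq_max sA.
  exact: leq_trans (size_scale_leq _ _) sB.
have hg : (size g <= s.+1)%N.
  apply: leq_trans (size_add _ _) _; rewrite geq_max sA size_opp.
  exact: leq_trans (size_scale_leq _ _) sB.
have hB0 : B.[0] = 0 by rewrite horner_coef0 formB0.
have h0 : f.[0] = g.[0] by rewrite /f /g !hornerD hornerN !hornerZ hB0 mulr0 oppr0.
have tE k : t k = rep_of A B k by rewrite rep_formAB.
have [cS [b [ef eg]]] := key hfg hf hg h0.
set S := [set i | root f (r i)] in cS ef eg.
case: (boolP (ord0 \in S)) => S0; last first.
  exists S; split => //; exists b, b => k; rewrite if_same tE.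
  have -> : A = AofFG f g by rewrite AB_invA.
  have -> : B = BofFG f g by rewrite AB_invB.
  rewrite ef eg; have [-> ->] := scaleAB ((-1) ^+ b) (fS S) (gS S).
  by rewrite rep_scale.
have hgf : g * f = p by rewrite mulrC.
have [cT [b' [eg' ef']]] := key hgf hg hf (esym h0).
set T := [set i | root g (r i)] in cT eg' ef'.
have T0 : ord0 \notin T.
  by rewrite inE eg rootZ ?sign_neq0 // root_gS S0.
exists T; split => //; exists b', (~~ b') => k; rewrite tE.
have -> : A = AofFG g f by rewrite -{1}(AB_invA A B) /AofFG; congr (_ *: _); exact: addrC.
have -> : B = - BofFG g f.
  by rewrite BofFG_swap opprK AB_invB.
rewrite ef' eg'; have [-> ->] := scaleAB ((-1) ^+ b') (fS T) (gS T).
rewrite /tsS /rep_of signrN; case: ifP => _; by rewrite ?coefN coefZ ?mulNr.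
Qed.

Lemma main_reps : @exactly_n_reps F s 'C(m', s) c.
Proof.
exists ts; split; [|split].
- move=> i; apply: is_rep_tsS; rewrite Sof_card.
  by have := enum_valP (cast_ord HN i); rewrite inE => /eqP.
- move=> i j nij hsr; move/negP: nij; apply.
  have ci A : A \in Dset -> #|Sof A| = s by rewrite inE Sof_card => /eqP.
  have := distinct (ci _ (enum_valP _)) (ci _ (enum_valP _)) (Sof_0 _) (Sof_0 _) hsr.
  move=> eS; apply/eqP; apply: (cast_ord_inj (eq_n := HN)); apply: enum_val_inj.
  apply/setP => k; have h (A' : {set 'I_m'}) : (k \in A') = (lift ord0 k \in Sof A').
    by rewrite /Sof mem_imset //; exact: lift_inj.
  by rewrite !h eS.
- move=> t /complete [S [cS S0 hS]].
  set A := [set j | lift ord0 j \in S].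
  have HA : A \in Dset by rewrite inE -Sof_card Sof_surj // cS.
  exists (cast_ord (esym HN) (enum_rank_in HA A)).
  by rewrite /ts cast_ordKV enum_rankK_in // Sof_surj.
Qed.

End Main.

Section Gen.
Variables (F : numClosedFieldType) (s : nat).
Hypothesis hs : (1 <= s)%N.
Let n := (2 * s).+1.

Definition coefP (m : nat) : mpoly F n := if (m < n)%N then mvar F (inord m) else [::].
Definition coefQ (m : nat) : mpoly F n := mmul (mconst n (m.+1)%:R) (coefP m.+1).
Let D := ((2 * s).-1 + 2 * s)%N.
Definition esyl (i j : 'I_D) : mpoly F n :=
  match split i with
  | inl k => if (k <= j)%N then coefP (j - k) else [::]
  | inr k => if (k <= j)%N then coefQ (j - k) else [::]
  end.
Definition g0 : mpoly F n := mmul (mmul (mvar F ord0) (mvar F ord_max)) (mdet esyl).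

Lemma meval_coefP m (x : 'I_n -> F) : meval (coefP m) x = (form_of x)`_m.
Proof.
by rewrite /coefP coef_poly; case: ifP => _; rewrite ?meval_var ?meval_nil.
Qed.

Lemma meval_coefQ m (x : 'I_n -> F) : meval (coefQ m) x = (form_of x)^`()`_m.
Proof. by rewrite meval_mul meval_const meval_coefP coef_deriv mulr_natl. Qed.

Lemma size_deriv_p (x : 'I_n -> F) : x ord_max != 0 -> size (form_of x)^`() = (2 * s)%N.
Proof.
move=> hx; have sp := size_p hx.
apply/eqP; rewrite eqn_leq; apply/andP; split.
  have := lt_size_deriv (p := form_of x); rewrite sp ltnS; apply.
  by rewrite -size_poly_gt0 sp.
have e : (2 * s)%N = (2 * s - 1).+1 by lia.
rewrite [X in (X <= _)%N]e ltnNge; apply/negP => hl.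
have := nth_default 0 hl; rewrite coef_deriv -e.
move/eqP; rewrite mulrn_eq0 => /orP [/eqP|]; first by lia.
rewrite coef_poly ltnSn => /eqP h; by move: hx; rewrite -inord_max h eqxx.
Qed.

Lemma meval_g0 (x : 'I_n -> F) : x ord_max != 0 ->
  meval g0 x = x ord0 * x ord_max * resultant (form_of x) (form_of x)^`().
Proof.
move=> hx; rewrite !meval_mul !meval_var meval_det; congr (_ * _); symmetry.
apply: res_gen; first by rewrite size_deriv_p.
  by rewrite size_p.
move=> i j; rewrite /esyl; case: split => k; case: leqP => _;
  by rewrite ?meval_coefP ?meval_coefQ ?meval_nil ?mulr1n ?mulr0n.
Qed.

Lemma sep_res (q : {poly F}) : q != 0 ->
  (resultant q q^`() != 0) = separable_poly q.
Proof.
move=> q0; rewrite resultant_eq0 -leqNgt unlock coprimep_def.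
have : (0 < size (gcdp q q^`()))%N by rewrite size_poly_gt0 gcdp_eq0 negb_and q0.
by case: (size _) => [|[|k]].
Qed.

End Gen.

Theorem theorem5p1 (F : numClosedFieldType) (s : nat) (hs : (1 <= s)%N) :
  general (fun c : 'I_(2 * s).+1 -> F => @exactly_n_reps F s 'C((2 * s - 1)%N, s) c).
Proof.
exists [:: g0 F s]; split.
  pose Q : {poly F} := 'X^(2 * s) - 1.
  have QE k : Q`_k = (k == 2 * s)%:R - (k == 0)%:R by rewrite coefB coefXn coef1.
  pose x := fun i : 'I_(2 * s).+1 => Q`_i.
  have fx : form_of x = Q.
    apply/polyP => k; rewrite coef_poly /x; case: ltnP => hk.
      by rewrite inordK.
    rewrite QE; have -> : (k == 2 * s) = false by apply/eqP; lia.
    have -> : (k == 0)%N = false by apply/eqP; lia.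
    by rewrite subr0.
  have x0 : x ord0 = -1.
    rewrite /x QE /=; have -> : (0 == 2 * s)%N = false by apply/eqP; lia.
    by rewrite sub0r.
  have xN : x ord_max = 1.
    rewrite /x QE /=; have -> : (2 * s == 0)%N = false by apply/eqP; lia.
    by rewrite eqxx subr0.
  have xN0 : x ord_max != 0 by rewrite xN oner_eq0.
  exists x; rewrite /nonvanish /= orbF meval_g0 // x0 xN !mulf_neq0 ?oppr_eq0 ?oner_eq0 //.
  rewrite sep_res fx; last by rewrite -size_poly_gt0 -fx size_p.
  rewrite unlock /Q derivB derivXn derivC subr0 -scaler_nat coprimepZr; last first.
    by rewrite pnatr_eq0; lia.
  apply: coprimep_expr.
  have := coprimep_XsubC Q 0; rewrite polyC0 subr0 => ->.
  rewrite /root horner_coef0 QE; have -> : (0 == 2 * s)%N = false by apply/eqP; lia.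
  by rewrite sub0r oppr_eq0 oner_eq0.
move=> x; rewrite /nonvanish /= orbF => hx.
have xN0 : x ord_max != 0.
  by apply: contraNneq hx => h; rewrite !meval_mul !meval_var h mulr0 mul0r.
move: hx; rewrite meval_g0 // !mulf_eq0 !negb_or => /andP [/andP [x00 _] hr].
apply: main_reps => //.
by rewrite -sep_res // -size_poly_gt0 size_p.
Qed.
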